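(* Let $r,a,b$ be positive integers with $\gcd(r,a)=\gcd(r,b)=1$. Then the isolated cyclic quotient singularity $\frac{1}{r}(a,b)$ is a T-singularity if and only if $r\mid(a+b)^2$.
   Context: $\frac{1}{r}(a,b)$ denotes the cyclic quotient singularity $\mathbb{C}^2/\mu_r$ with $\zeta\cdot(x,y)=(\zeta^ax,\zeta^by)$; two such are isomorphic in particular when one is obtained from the other by multiplying $(a,b)$ by an integer coprime to $r$ or swapping $a$ and $b$. A T-singularity is a quotient surface singularity admitting a $\mathbb{Q}$-Gorenstein one-parameter smoothing; by Kollár–Shepherd-Barron, the cyclic quotient T-singularities are exactly those isomorphic to $\frac{1}{nd^2}(1,dna-1)$ for positive integers $n,d,a$ with $\gcd(d,a)=1$. *)

(* Defs.v *)
From mathcomp Require Import all_boot.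
Set Implicit Arguments. Unset Strict Implicit. Unset Printing Implicit Defensive.

(* Isomorphism of (isolated) cyclic quotient singularities 1/r(a,b) and
   1/r(a',b'): there is an integer u coprime to r with
   (a',b') = u(a,b) or (a',b') = u(b,a) modulo r. *)
Definition cqs_iso (r a b a' b' : nat) : Prop :=
  exists u : nat, coprime u r /\
    ((a' = u * a %[mod r] /\ b' = u * b %[mod r]) \/
     (a' = u * b %[mod r] /\ b' = u * a %[mod r])).

Definition is_T_singularity (r a b : nat) : Prop :=
  exists n d c : nat, [/\ 0 < n, 0 < d, 0 < c, coprime d c &
    r = n * d ^ 2 /\ cqs_iso r 1 (d * n * c - 1) a b].

(* Main.v *)
Require Import Defs.
From mathcomp Require Import all_boot.
From mathcomp Require Import zify.

Lemma sum_mod r a b u K : 0 < K ->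
  a = u * 1 %[mod r] -> b = u * (K - 1) %[mod r] -> a + b = u * K %[mod r].
Proof.
move=> K0 ha hb.
rewrite -modnDm ha hb modnDm.
congr (_ %% _). rewrite muln1 -{1}(muln1 u) -mulnDr. congr (_ * _). lia.
Qed.

Lemma fwd r a b n d c u : r = n * d ^ 2 -> a + b = u * (d * n * c) %[mod r] ->
  r %| (a + b) ^ 2.
Proof.
move=> hr h.
rewrite /dvdn -modnXm h modnXm -/(dvdn _ _) hr.
apply/dvdnP; exists (u ^ 2 * n * c ^ 2). rewrite !expnMn. nia.
Qed.

Lemma L1 d n : d * (d * n) = n * d ^ 2.
Proof. nia. Qed.
Lemma L2 d n s m t r : m = d * n -> t = s * m -> r = d * m -> d * n * (s + d) = t + r.
Proof. move=> -> -> ->. nia. Qed.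
Lemma L3 a b t r q : 0 < a -> 0 < r -> a * t = (a + b) * (r * q) + (a + b) ->
  a * (t + r - 1) = b + r * ((a + b) * q + a).
Proof. move=> a0 r0 h.
rewrite mulnBr muln1 mulnDr h.
rewrite mulnDr [(a + b) * (r * q)]mulnCA [a * r]mulnC.
lia. Qed.
Theorem lemma3p6 (r a b : nat) :
  0 < r -> 0 < a -> 0 < b -> coprime r a -> coprime r b ->
  (is_T_singularity r a b <-> r %| (a + b) ^ 2).
Proof.
move=> r0 a0 b0 cra crb; split.
  case=> n [d [c [n0 d0 c0 cdc [hr [u [cu [[h1 h2]|[h1 h2]]]]]]]].
    apply: (@fwd r a b n d c u hr); apply: sum_mod => //; rewrite !muln_gt0 n0 d0 c0 //.
  apply: (@fwd r a b n d c u hr); rewrite addnC; apply: sum_mod => //; rewrite !muln_gt0 n0 d0 c0 //.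
move=> hdiv.
have [x _ hx] := Bezoutr a r0.
move: hx; rewrite gcdnC (eqP cra) => /dvdnP [k hk].
set a' := x * (r - 1) + r.
have k1 : 0 < k by case: k hk => //=; lia.
have haa : a * a' = r * (k * r + a - k - 1) + 1.
  rewrite /a' mulnDr. have -> : a * (x * (r - 1)) = (x * a) * (r - 1) by nia.
  have -> : x * a = k * r - 1 by lia.
  have kr : r <= k * r by rewrite leq_pmull.
  case: r r0 kr {hk a' hdiv cra crb} => // r' _ kr.
  have -> : k * r'.+1 = k * r' + k by rewrite mulnS addnC.
  case: k k1 kr => // k' _ kr.
  rewrite subSS !subn0 /=. nia.
set t := (a + b) * a'.
set m := gcdn t r.
have m0 : 0 < m by rewrite gcdn_gt0 r0 orbT.
set d := r %/ m.
have hr : r = d * m by rewrite /d divnK // dvdn_gcdr.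
have ht2 : r %| t ^ 2 by rewrite /t expnMn dvdn_mulr.
have hm2 : r %| m ^ 2.
  rewrite expnS expn1 /m muln_gcdl !muln_gcdr.
  have ht2' : r %| t * t by move: ht2; rewrite expnS expn1.
  rewrite !dvdn_gcd ht2' (dvdn_mull t (dvdnn r)) (dvdn_mulr t (dvdnn r)).
  by rewrite (dvdn_mulr r (dvdnn r)).
move/dvdnP: hm2 => [n hn].
have hmn : m = d * n.
  apply/eqP; rewrite -(eqn_pmul2r m0); apply/eqP. have e : m * m = n * r by rewrite -hn expnS expn1.
  by rewrite e hr mulnA [n * d]mulnC.
have n0 : 0 < n by move: m0; rewrite hmn muln_gt0 => /andP[].
have d0 : 0 < d by move: m0; rewrite hmn muln_gt0 => /andP[].
set s := t %/ m.
have hts : t = s * m by rewrite /s divnK // dvdn_gcdl.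
have cds : coprime d s.
  rewrite /coprime; apply/eqP.
  apply/eqP; rewrite -(eqn_pmul2r m0) mul1n; apply/eqP.
  by rewrite gcdnC muln_gcdl -hts -hr.
exists n, d, (s + d); split => //.
- lia.
- by rewrite -coprime_modr modnDr coprime_modr.
split; first by rewrite hr hmn; apply: L1.
exists a; split; first by rewrite coprime_sym.
left; split; first by rewrite muln1.
have hK : d * n * (s + d) = t + r by exact: (L2 _ _ _ _ _ _ hmn hts hr).
rewrite hK.
have -> : a * (t + r - 1) = b + r * ((a + b) * (k * r + a - k - 1) + a).
  apply: L3 => //.
  by rewrite /t mulnCA haa mulnDr muln1.
by rewrite addnC mulnC modnMDl.
Qed.
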